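(* Let $(R_1,R_2,\ldots,R_h)$, $h\ge 2$, be rows whose overlap graph is the path $R_1-R_2-\cdots-R_h$ (i.e., $R_i$ and $R_j$ overlap if and only if $|i-j|=1$). For $1\le i\le h-1$ let $\mathcal A_i=\{R_i\setminus R_{i+1},\ R_i\cap R_{i+1},\ R_{i+1}\setminus R_i\}$ and $\mathcal A=\bigcup_{i=1}^{h-1}\mathcal A_i$. Let $C\subseteq \bigcup_{i=1}^h R_i$ be a set of columns. Then the overlap graph of the family $(R_1\cap C,\ldots,R_h\cap C)$ is connected if and only if every member of $\mathcal A$ contains an element of $C$.
   Context: Each row is identified with the set of columns in which it has a 1. Two rows (sets) overlap if their intersection is nonempty and neither is a subset of the other; the overlap graph of an indexed family of rows has one vertex per index and joins two indices when the corresponding rows overlap. *)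

(* Defs.v *)
From mathcomp Require Import all_boot.
Set Implicit Arguments. Unset Strict Implicit. Unset Printing Implicit Defensive.

(* Rows are finite sets of columns (columns range over a finite type T). *)
Definition overlap (T : finType) (A B : {set T}) : bool :=
  [&& A :&: B != set0, ~~ (A \subset B) & ~~ (B \subset A)].

Definition overlap_rel (T : finType) (I : finType) (R : I -> {set T}) : rel I :=
  fun i j => overlap (R i) (R j).

Definition overlap_connected (T : finType) (I : finType) (R : I -> {set T}) : Prop :=
  forall i j : I, connect (overlap_rel R) i j.

(* Main.v *)
Require Import Defs.
From mathcomp Require Import all_boot.

Lemma setDIC (T : finType) (A B C : {set T}) :
  (A :&: C) :\: (B :&: C) = (A :\: B) :&: C.
Proof. by apply/setP => x; rewrite !inE; case: (x \in A); case: (x \in B); case: (x \in C). Qed.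

Lemma overlapE (T : finType) (A B : {set T}) :
  overlap A B = [&& A :&: B != set0, A :\: B != set0 & B :\: A != set0].
Proof. by rewrite /overlap !setD_eq0. Qed.

Lemma overlapCE (T : finType) (A B C : {set T}) :
  overlap (A :&: C) (B :&: C) =
  [&& (A :&: B) :&: C != set0, (A :\: B) :&: C != set0 & (B :\: A) :&: C != set0].
Proof.
rewrite overlapE.
have -> : (A :&: C) :&: (B :&: C) = (A :&: B) :&: C.
  by apply/setP => x; rewrite !inE; case: (x \in A); case: (x \in B); case: (x \in C).
by rewrite !setDIC.
Qed.

Lemma overlap_sym (T : finType) (A B : {set T}) : overlap A B = overlap B A.
Proof. by rewrite !overlapE setIC; case: (_ :\: _ != set0); case: (_ :\: _ != set0); case: (_ != set0). Qed.

Lemma overlap_restr (T : finType) (A B C : {set T}) :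
  overlap (A :&: C) (B :&: C) -> overlap A B.
Proof.
rewrite overlapCE overlapE => /and3P [h1 h2 h3]; apply/and3P; split.
- by apply: contraNN h1 => /eqP ->; rewrite set0I.
- by apply: contraNN h2 => /eqP ->; rewrite set0I.
- by apply: contraNN h3 => /eqP ->; rewrite set0I.
Qed.

Theorem mainTheorem10 (T : finType) (h : nat) (R : 'I_h -> {set T}) (C : {set T}) :
  2 <= h ->
  (forall i j : 'I_h, overlap (R i) (R j) = (i.+1 == j :> nat) || (j.+1 == i :> nat)) ->
  C \subset \bigcup_(i < h) R i ->
  overlap_connected (fun i : 'I_h => R i :&: C) <->
  (forall i j : 'I_h, i.+1 = j :> nat ->
     [/\ (R i :\: R j) :&: C != set0,
         (R i :&: R j) :&: C != set0 &
         (R j :\: R i) :&: C != set0]).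
Proof.
move=> _ Hov _.
set r := overlap_rel (fun i : 'I_h => R i :&: C).
have radj : forall x y, r x y -> (x.+1 == y :> nat) || (y.+1 == x :> nat).
  by move=> x y /overlap_restr; rewrite Hov.
split.
- move=> Hc i j Hij.
  have : r i j.
    apply/negPn/negP => Hn.
    have key : forall (p : seq 'I_h) (x : 'I_h), x <= i -> path r x p -> last x p <= i.
      elim=> [|y p IH] x Hx //= /andP [Hxy Hp]; apply: IH Hp.
      case/orP: (radj _ _ Hxy) => /eqP E.
      + rewrite -E; rewrite leq_eqVlt in Hx; case/orP: Hx => [/eqP Exi|] //.
        have Ey : y = j by apply: val_inj; rewrite /= -E Exi Hij.
        have Ex : x = i by apply: val_inj.
        by move: Hxy Hn; rewrite Ey Ex => ->.
      + by rewrite -E in Hx; apply: ltnW.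
    case/connectP: (Hc i j) => p Hp Ej.
    by have := key p i (leqnn _) Hp; rewrite -Ej -Hij ltnn.
  rewrite /r /overlap_rel /= overlapCE => /and3P [h1 h2 h3].
  by split.
- move=> Hcond.
  have rsym : symmetric r by move=> x y; rewrite /r /overlap_rel /= overlap_sym.
  have up : forall n (a b : 'I_h), nat_of_ord b = n -> a <= b -> connect r a b.
    elim=> [|n IH] a b Eb Hab.
      have -> : a = b by apply: val_inj => /=; move: Hab; rewrite Eb leqn0 => /eqP.
      exact: connect0.
    case: (eqVneq a b) => [-> | Hne]; first exact: connect0.
    have Hn : n < h by apply: ltnW; rewrite -Eb ltn_ord.
    have Hab' : a <= Ordinal Hn.
      rewrite /= -ltnS -Eb ltn_neqAle Hab andbT; apply: contra Hne => /eqP E; apply/eqP/val_inj; exact: E.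
    apply: connect_trans (IH a (Ordinal Hn) erefl Hab') (connect1 _).
    have [h1 h2 h3] := Hcond (Ordinal Hn) b (esym Eb).
    by rewrite /r /overlap_rel /= overlapCE h1 h2 h3.
  move=> i j; case: (leqP i j) => Hij; first exact: up erefl Hij.
  rewrite (sym_connect_sym rsym); exact: up erefl (ltnW Hij).
Qed.
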